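(* Let $G$ consist of two parallel paths $P_1,P_2$ from $s$ to $d$ with $l_{P_1}<l_{P_2}$. Suppose the dynamics is governed by the linear decision rule, that the exogenous inputs are constant and positive, $f_s(t)=\bar f>0$ and $b_d(t)=\bar b>0$ for all $t\ge 0$, and that the initial pheromone level $p_{uv}(0)$ is positive for every edge $(u,v)\in P_1$ (the initial pheromone levels on $P_2$ and all initial flows at internal vertices are arbitrary nonnegative numbers). Then there exist constants $C_1,C_2>0$, depending on $\delta,\bar f,\bar b$, the leakage parameters, the path lengths and the initial configuration, but not on $\epsilon$, such that for every $\epsilon\in(0,1)$ and every integer $t\ge C_1+C_2\log(1/\epsilon)$ we have $\nu^f_{uv}(t)\ge 1-\epsilon$ and $\nu^b_{uv}(t)\ge 1-\epsilon$ for every edge $(u,v)\in P_1$.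
   Context: Model. $G=(V,E)$ is a finite directed graph with a source vertex $s$ and a destination vertex $d$. Time is discrete, $t=0,1,2,\dots$. The state at time $t$ consists of pheromone levels $p_{uv}(t)\ge 0$ for $(u,v)\in E$, forward flows $f_v(t)\ge 0$ and backward flows $b_v(t)\ge0$ for $v\in V$. Each vertex $v$ has a leakage parameter $l_v\in[0,1]$, and $\delta\in(0,1)$ is a fixed decay parameter. The values $f_s(t)$ and $b_d(t)$ are exogenous inputs (the flow newly appearing at $s$ and at $d$ at time $t$); all other flows are determined by the dynamics from the initial state. Linear decision rule: $f_{uv}(t)=f_u(t)\,p_{uv}(t)/\sum_{z:(u,z)\in E}p_{uz}(t)$ and $b_{uv}(t)=b_v(t)\,p_{uv}(t)/\sum_{z:(z,v)\in E}p_{zv}(t)$, with the convention that at a vertex with a single outgoing (resp. incoming) edge the entire forward (resp. backward) flow is sent along that edge. Updates: for $v\neq s$, $f_v(t+1)=(1-l_v)\sum_{z:(z,v)\in E}f_{zv}(t)$; for $u\ne d$, $b_u(t+1)=(1-l_u)\sum_{z:(u,z)\in E}b_{uz}(t)$; and $p_{uv}(t+1)=\delta\,(p_{uv}(t)+f_{uv}(t)+b_{uv}(t))$ for all $(u,v)\in E$. Normalized pheromone levels: $\nu^f_{uv}(t)=p_{uv}(t)/\sum_{z:(u,z)\in E}p_{uz}(t)$ and $\nu^b_{uv}(t)=p_{uv}(t)/\sum_{z:(z,v)\in E}p_{zv}(t)$. For a path $P$ from $s$ to $d$, its leakage is $l_P=1-\prod_{v\in P\setminus\{s,d\}}(1-l_v)$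 and its length $\mathrm{len}(P)$ is its number of edges. Two parallel paths: $G$ is the union of two directed paths $P_1,P_2$ from $s$ to $d$ that share no vertices other than $s$ and $d$. *)

(* Defs.v *)
From HB Require Import structures.
From mathcomp Require Import all_boot all_order all_algebra.
From mathcomp Require Import all_classical all_reals all_analysis.

Set Implicit Arguments.
Unset Strict Implicit.
Unset Printing Implicit Defensive.

Import Order.TTheory GRing.Theory Num.Theory.
Local Open Scope ring_scope.

Section Model.
Variables (R : realType) (V : finType) (E : rel V) (s d : V).

(* State at a time t: pheromone levels p_{uv} (only meaningful on edges),
   forward flows f_v and backward flows b_v. *)
Record state := State {
  ph : V -> V -> R;
  fw : V -> R;
  bw : V -> R }.

Definition outdeg (u : V) : nat := #|[pred z | E u z]|.
Definition indeg (v : V) : nat := #|[pred z | E z v]|.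

Definition fedge (st : state) (u v : V) : R :=
  if E u v then
    (if outdeg u == 1%N then fw st u
     else fw st u * ph st u v / \sum_(z | E u z) ph st u z)
  else 0.

Definition bedge (st : state) (u v : V) : R :=
  if E u v then
    (if indeg v == 1%N then bw st v
     else bw st v * ph st u v / \sum_(z | E z v) ph st z v)
  else 0.

Variables (l : V -> R) (delta : R) (fs bd : nat -> R).

(* One step of the dynamics, from time t to time t+1; [fs] and [bd] are
   the exogenous inputs f_s(.) and b_d(.). *)
Definition step (t : nat) (st : state) : state :=
  State (fun u v => delta * (ph st u v + fedge st u v + bedge st u v))
        (fun v => if v == s then fs t.+1
                  else (1 - l v) * \sum_(z | E z v) fedge st z v)
        (fun u => if u == d then bd t.+1
                  else (1 - l u) * \sum_(z | E u z) bedge st u z).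

(* The trajectory from initial pheromones [p0] and initial flows [f0], [b0]
   (f_s(0) and b_d(0) are the exogenous inputs at time 0). *)
Fixpoint traj (p0 : V -> V -> R) (f0 b0 : V -> R) (t : nat) : state :=
  match t with
  | 0%N => State p0 (fun v => if v == s then fs 0 else f0 v)
                    (fun u => if u == d then bd 0 else b0 u)
  | t'.+1 => step t' (traj p0 f0 b0 t')
  end.

Definition nuf (st : state) (u v : V) : R :=
  ph st u v / \sum_(z | E u z) ph st u z.
Definition nub (st : state) (u v : V) : R :=
  ph st u v / \sum_(z | E z v) ph st z v.

End Model.

(* A path from [x] is represented by the sequence [p] of vertices following
   [x]; (u,v) is an edge of the path iff it is a pair of consecutive
   vertices of [x :: p]. *)
Definition path_edge (V : eqType) (x : V) (p : seq V) (u v : V) : bool :=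
  (u, v) \in zip (x :: p) p.

Definition two_parallel_paths (V : finType) (E : rel V) (s d : V)
    (p1 p2 : seq V) : Prop :=
  s != d /\
  [/\ [/\ path E s p1, last s p1 = d & uniq (s :: p1)],
      [/\ path E s p2, last s p2 = d & uniq (s :: p2)],
      (forall x, x \in p1 -> x \in p2 -> x = d),
      (forall u v, E u v = path_edge s p1 u v || path_edge s p2 u v) &
      (forall v, [|| v == s, v \in p1 | v \in p2])].

Definition pathleak (R : realType) (V : eqType) (l : V -> R) (d : V)
    (p : seq V) : R :=
  1 - \prod_(v <- p | v != d) (1 - l v).

(* Main.v *)
Require Import Defs.
From HB Require Import structures.
From mathcomp Require Import all_boot all_order all_algebra.
From mathcomp Require Import all_classical all_reals all_analysis.
From mathcomp Require Import ring lra zify.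
Import Order.TTheory GRing.Theory Num.Theory.
Local Open Scope ring_scope.

Lemma step_ineq (R : realType) (A B f b a1 a2 m c Dm dl x y1 y2 : R) :
  0 < A -> 0 <= B -> x = A / (A + B) -> 0 <= m <= 1 -> m <= x ->
  m <= y1 <= 1 -> m <= y2 <= 1 -> 0 <= a2 -> a2 <= a1 -> a1 <= 1 ->
  0 < b -> 0 <= f -> 0 < dl -> A + B + f + 2 * b <= Dm -> 0 <= c ->
  c * Dm <= b * (a1 - a2) ->
  1 - dl * (A + f * x + b * a1 * y1) /
     (dl * (A + f * x + b * a1 * y1) + dl * (B + f * (1 - x) + b * a2 * (1 - y2)))
  <= (1 - m) * (1 - c * m).
Proof.
move=> A0 B0 xE /andP[m0 m1] mx /andP[my1 y11] /andP[my2 y21] a20 a21 a11 b0 f0 dl0 hD c0 hc.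
set S := A + B.
have S0 : 0 < S by rewrite /S; lra.
have AE : A = x * S by rewrite xE /S; field; apply: lt0r_neq0; lra.
have x1 : x <= 1 by rewrite xE ler_pdivrMr //; lra.
set Dn := S + f + b * a1 * y1 + b * a2 * (1 - y2).
have eden : dl * (A + f * x + b * a1 * y1) + dl * (B + f * (1 - x) + b * a2 * (1 - y2)) = dl * Dn.
  by rewrite /Dn /S; ring.
have Dn0 : 0 < Dn.
  rewrite /Dn; have : 0 <= b * a1 * y1 by rewrite !mulr_ge0 //; lra.
  have : 0 <= b * a2 * (1 - y2) by rewrite !mulr_ge0 //; lra.
  lra.
have DnD : Dn <= Dm.
  rewrite /Dn /S.
  have : b * a1 * y1 <= b by rewrite -mulrA; apply: ler_piMr; [lra| apply: mulr_ile1; lra].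
  have : b * a2 * (1 - y2) <= b by rewrite -mulrA; apply: ler_piMr; [lra| apply: mulr_ile1; lra].
  lra.
rewrite eden.
have -> : 1 - dl * (A + f * x + b * a1 * y1) / (dl * Dn) = (Dn - (A + f * x + b * a1 * y1)) / Dn.
  by field; apply/andP; split; apply: lt0r_neq0.
rewrite ler_pdivrMr //.
set N := A + f * x + b * a1 * y1.
have key : m * (1 - m) * (b * (a1 - a2)) <= N - m * Dn.
  have -> : N - m * Dn = (x - m) * (S + f) + b * a1 * (y1 * (1 - m)) - m * b * a2 * (1 - y2).
    by rewrite /N /Dn AE; ring.
  have h1 : 0 <= (x - m) * (S + f) by rewrite mulr_ge0 //; lra.
  have h2 : b * a1 * (m * (1 - m)) <= b * a1 * (y1 * (1 - m)).
    by apply: ler_wpM2l; [apply: mulr_ge0; lra| apply: ler_wpM2r; lra].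
  have h3 : m * b * a2 * (1 - y2) <= m * b * a2 * (1 - m).
    by apply: ler_wpM2l; [rewrite !mulr_ge0 //; lra| lra].
  have -> : m * (1 - m) * (b * (a1 - a2)) = b * a1 * (m * (1 - m)) - m * b * a2 * (1 - m) by ring.
  lra.
have key2 : c * m * (1 - m) * Dn <= m * (1 - m) * (b * (a1 - a2)).
  have mm : 0 <= m * (1 - m) by rewrite mulr_ge0 //; lra.
  have : c * Dn <= c * Dm by rewrite ler_wpM2l.
  have -> : c * m * (1 - m) * Dn = m * (1 - m) * (c * Dn) by ring.
  move=> h; apply: le_trans (ler_wpM2l mm h) _; apply: ler_wpM2l => //.
have -> : (1 - m) * (1 - c * m) * Dn = Dn - m * Dn - c * m * (1 - m) * Dn by ring.
lra.
Qed.

Lemma frac01 (R : realType) (P Q : R) : 0 < P -> 0 <= Q -> 0 < P / (P + Q) <= 1.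
Proof.
move=> P0 Q0; apply/andP; split; first by rewrite divr_gt0 //; lra.
by rewrite ler_pdivrMr; lra.
Qed.

Lemma baz (R : realType) (bb aa zz : R) : 0 <= bb -> 0 <= aa <= 1 -> 0 <= zz <= 1 -> bb * aa * zz <= bb.
Proof.
move=> b0 /andP[? ?] /andP[? ?]; rewrite -mulrA; apply: ler_piMr => //; apply: mulr_ile1 => //.
Qed.

Lemma sum_bound (R : realType) (K : nat) (dl h : R) (P Q : nat -> R) :
  0 < dl < 1 -> 0 <= h ->
  (forall t, 0 <= P t) -> (forall t, 0 <= Q t) ->
  (forall t, (K <= t)%N -> P t.+1 + Q t.+1 <= dl * (P t + Q t + h)) ->
  forall t, (K <= t)%N -> P t + Q t <= P K + Q K + h / (1 - dl).
Proof.
move=> /andP[dl0 dl1] h0 P0 Q0 hs.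
have G0 : 0 <= h / (1 - dl) by rewrite divr_ge0 //; lra.
elim=> [|t IH] ht.
  by rewrite leqn0 in ht; move/eqP: ht => <-; lra.
case: (ltngtP K t.+1) ht => // [ltK|<-] _; last by lra.
have {}IH := IH ltK.
apply: le_trans (hs _ ltK) _.
have h1 : dl * (P t + Q t + h) <= dl * (P K + Q K + h / (1 - dl) + h).
  by apply: ler_wpM2l; lra.
apply: le_trans h1 _.
have PK := P0 K; have QK := Q0 K.
have GE : h / (1 - dl) * (1 - dl) = h by field; apply: lt0r_neq0; lra.
have : 0 <= (1 - dl) * (P K + Q K) by apply: mulr_ge0; lra.
nra.
Qed.

Fixpoint minpref (R : realType) (F : nat -> R) (n : nat) : R :=
  match n with 0 => F 0%N | n'.+1 => Num.min (minpref R F n') (F n) end.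
Arguments minpref {R}.

Lemma minpref_pos (R : realType) (F : nat -> R) n : (forall i, 0 < F i) -> 0 < minpref F n.
Proof. by move=> hF; elim: n => [|n IH] //=; rewrite lt_min IH hF. Qed.

Lemma minpref_le (R : realType) (F : nat -> R) n i : (i <= n)%N -> minpref F n <= F i.
Proof.
elim: n => [|n IH] /=; first by rewrite leqn0 => /eqP ->.
rewrite leq_eqVlt => /orP[/eqP ->|hi]; first by rewrite ge_min lexx orbT.
by rewrite ge_min IH.
Qed.

Lemma core (R : realType) (f b a1 a2 dl : R) (k1 k2 K : nat) (A B C D x y : nat -> R) :
  0 < dl -> dl < 1 -> 0 < f -> 0 < b -> 0 <= a2 -> a2 < a1 -> a1 <= 1 ->
  (k1 <= K)%N -> (k2 <= K)%N ->
  (forall t, 0 < A t) -> (forall t, 0 <= B t) -> (forall t, 0 < C t) -> (forall t, 0 <= D t) ->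
  (forall t, x t = A t / (A t + B t)) -> (forall t, y t = C t / (C t + D t)) ->
  (forall t, (K <= t)%N ->
     [/\ A t.+1 = dl * (A t + f * x t + b * a1 * y (t - k1)%N),
         B t.+1 = dl * (B t + f * (1 - x t) + b * a2 * (1 - y (t - k2)%N)),
         C t.+1 = dl * (C t + b * y t + f * a1 * x (t - k1)%N) &
         D t.+1 = dl * (D t + b * (1 - y t) + f * a2 * (1 - x (t - k2)%N))]) ->
  exists C1 C2 : R, 0 < C1 /\ 0 < C2 /\
    forall eps : R, 0 < eps < 1 ->
    forall t : nat, C1 + C2 * ln (eps^-1) <= t%:R ->
    1 - eps <= x t /\ 1 - eps <= y t.
Proof.
move=> hdl0 hdl1 hf hb ha2 ha12 ha1 hk1 hk2 hA hB hC hD hx hy hrec.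
have x01 t : 0 < x t <= 1 by rewrite hx frac01.
have y01 t : 0 < y t <= 1 by rewrite hy frac01.
set G := (f + b + f + b) / (1 - dl).
have G0 : 0 <= G by rewrite /G divr_ge0 //; lra.
set Dm := A K + B K + C K + D K + G + (f + b + f + b).
have AB_bound t : (K <= t)%N -> A t + B t + f + b + b <= Dm.
  move=> ht.
  have : A t + B t <= A K + B K + G.
    have SB := @sum_bound R K dl (f + b + f + b) A B (ltac:(by rewrite hdl0 hdl1)) (ltac:(lra)) (fun t => ltW (hA t)) hB.
    apply: SB ht => s hs.
    have [-> -> _ _] := hrec _ hs.
    have := x01 s; have := y01 (s - k1)%N; have := y01 (s - k2)%N => hy2 hy1 hx1.
    have h1 : b * a1 * y (s - k1)%N <= b by apply: baz; lra.
    have h2 : b * a2 * (1 - y (s - k2)%N) <= b by apply: baz; lra.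
    nra.
  have := hC K; have := hD K; rewrite /Dm; lra.
have CD_bound t : (K <= t)%N -> C t + D t + b + f + f <= Dm.
  move=> ht.
  have : C t + D t <= C K + D K + G.
    have SB := @sum_bound R K dl (f + b + f + b) C D (ltac:(by rewrite hdl0 hdl1)) (ltac:(lra)) (fun t => ltW (hC t)) hD.
    apply: SB ht => s hs.
    have [_ _ -> ->] := hrec _ hs.
    have := y01 s; have := x01 (s - k1)%N; have := x01 (s - k2)%N => hy2 hy1 hx1.
    have h1 : f * a1 * x (s - k1)%N <= f by apply: baz; lra.
    have h2 : f * a2 * (1 - x (s - k2)%N) <= f by apply: baz; lra.
    nra.
  have := hA K; have := hB K; rewrite /Dm; lra.
have Dm_pos : f + b < Dm.
  have := AB_bound _ (leqnn K); have := hA K; have := hB K; lra.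
set c := (a1 - a2) * Num.min f b / Dm.
have [c0 [cb [cf c1]]] : 0 < c /\ c * Dm <= b * (a1 - a2) /\ c * Dm <= f * (a1 - a2) /\ c < 1.
  have D0 : 0 < Dm by lra.
  have cD : c * Dm = (a1 - a2) * Num.min f b by rewrite /c; field; apply: lt0r_neq0.
  have m0 : 0 < Num.min f b by rewrite lt_min hf hb.
  have mf : Num.min f b <= f by rewrite ge_min lexx.
  have mb : Num.min f b <= b by rewrite ge_min lexx orbT.
  split; first by rewrite /c divr_gt0 // mulr_gt0 //; lra.
  rewrite cD; split; first nra.
  split; first nra.
  rewrite /c ltr_pdivrMr // mul1r.
  nra.
have one_step t m : (K <= t)%N -> 0 <= m <= 1 ->
  m <= x t -> m <= x (t - k1)%N -> m <= x (t - k2)%N ->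
  m <= y t -> m <= y (t - k1)%N -> m <= y (t - k2)%N ->
  1 - x t.+1 <= (1 - m) * (1 - c * m) /\ 1 - y t.+1 <= (1 - m) * (1 - c * m).
  move=> ht hm mx mx1 mx2 my my1 my2.
  have [eA eB eC eD] := hrec _ ht.
  split.
    rewrite hx eA eB.
    apply: (@step_ineq R (A t) (B t) f b a1 a2 m c Dm dl) => //;
      first [ by rewrite -hx | by apply/andP; split; [assumption| exact: (andP (y01 _)).2]
            | exact: ltW | (have := AB_bound _ ht; lra) ].
  rewrite hy eC eD.
  apply: (@step_ineq R (C t) (D t) b f a1 a2 m c Dm dl) => //;
    first [ by rewrite -hy | by apply/andP; split; [assumption| exact: (andP (x01 _)).2]
          | exact: ltW | (have := CD_bound _ ht; lra) ].
pose m0 := minpref (fun i => Num.min (x i) (y i)) K.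
have m0pos : 0 < m0.
  apply: minpref_pos => i; rewrite lt_min; have := x01 i; have := y01 i.
  by case/andP=> -> _; case/andP=> -> _.
have m0le i : (i <= K)%N -> m0 <= x i /\ m0 <= y i.
  move=> hi; have := @minpref_le R (fun i => Num.min (x i) (y i)) K i hi.
  by rewrite le_min => /andP[-> ->].
have m01 : m0 <= 1.
  by have [h _] := m0le 0%N (leq0n _); have := x01 0%N; lra.
have glob t : m0 <= x t /\ m0 <= y t.
  elim/ltn_ind: t => t IH.
  case: (leqP t K) => [|ltK]; first exact: m0le.
  case: t ltK IH => // i ltK IH.
  have hK : (K <= i)%N by [].
  have hi : (i < i.+1)%N by [].
  have hi1 : (i - k1 < i.+1)%N by rewrite ltnS leq_subr.
  have hi2 : (i - k2 < i.+1)%N by rewrite ltnS leq_subr.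
  have [a1' b1'] := IH _ hi; have [a2' b2'] := IH _ hi1; have [a3' b3'] := IH _ hi2.
  have [s1 s2] := one_step i m0 hK (ltac:(by rewrite (ltW m0pos) m01)) a1' a2' a3' b1' b2' b3'.
  have : (1 - m0) * (1 - c * m0) <= 1 - m0.
    rewrite ler_piMr //; first lra.
    have : 0 <= c * m0 by rewrite mulr_ge0 // ltW.
    lra.
  lra.
pose rho := 1 - c * m0.
have rho0 : 0 < rho.
  rewrite /rho; have : c * m0 <= c * 1 by rewrite ler_wpM2l // ltW.
  lra.
have rho1 : rho < 1 by rewrite /rho; have := mulr_gt0 c0 m0pos; lra.
have H n : forall t, (n * K.+1 <= t)%N -> 1 - x t <= rho ^+ n /\ 1 - y t <= rho ^+ n.
  elim: n => [|n IH] t ht.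
    by rewrite expr0; have := x01 t; have := y01 t; lra.
  case: t ht => [|i] ht; first by rewrite mulSn addSn in ht.
  have [hK hn hn1 hn2] : [/\ (K <= i)%N, (n * K.+1 <= i)%N, (n * K.+1 <= i - k1)%N & (n * K.+1 <= i - k2)%N].
    by move: ht hk1 hk2; rewrite mulSn; move: (n * K.+1)%N => N; clear => h1 h2 h3; split; lia.
  have [a1' b1'] := IH _ hn; have [a2' b2'] := IH _ hn1; have [a3' b3'] := IH _ hn2.
  have [g1 g2] := glob i; have [g3 g4] := glob (i - k1)%N; have [g5 g6] := glob (i - k2)%N.
  have rn0 : 0 <= rho ^+ n by rewrite exprn_ge0 // ltW.
  have rn1 : rho ^+ n <= 1 by rewrite exprn_ile1 // ltW.
  have fin m : m0 <= m -> m <= 1 -> 1 - m <= rho ^+ n ->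
      (1 - m) * (1 - c * m) <= rho ^+ n.+1.
    move=> hm0 hm1 hmr; rewrite exprSr.
    have h1 : 1 - c * m <= rho.
      have : c * m0 <= c * m by rewrite ler_pM2l.
      rewrite /rho; lra.
    have h2 : 0 <= 1 - c * m.
      have : c * m <= c * 1 by rewrite ler_pM2l.
      lra.
    have e1 : (1 - m) * (1 - c * m) <= rho ^+ n * (1 - c * m) := ler_wpM2r h2 hmr.
    have e2 : rho ^+ n * (1 - c * m) <= rho ^+ n * rho := ler_wpM2l rn0 h1.
    lra.
  case: (leP m0 (1 - rho ^+ n)) => hm.
    have [s1 s2] := one_step i (1 - rho ^+ n) hK (ltac:(apply/andP; split; lra))
      (ltac:(lra)) (ltac:(lra)) (ltac:(lra)) (ltac:(lra)) (ltac:(lra)) (ltac:(lra)).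
    have := fin (1 - rho ^+ n) hm (ltac:(lra)) (ltac:(lra)); lra.
  have [s1 s2] := one_step i m0 hK (ltac:(by rewrite (ltW m0pos) m01)) g1 g3 g5 g2 g4 g6.
  have := fin m0 (lexx _) m01 (ltac:(lra)); lra.
have lnr : ln rho < 0 by apply: ln_lt0; rewrite rho0 rho1.
exists (K.+1)%:R, ((K.+1)%:R / (- ln rho)); split; first by rewrite ltr0n.
split; first by rewrite divr_gt0 ?ltr0n // oppr_gt0.
move=> eps /andP[e0 e1] t ht.
pose n := (t %/ K.+1)%N.
have [hx1 hy1] := H n t (leq_trunc_div _ _).
have tlt : (t < n.+1 * K.+1)%N by apply: ltn_ceil.
have tltR : t%:R < (n.+1 * K.+1)%:R :> R by rewrite ltr_nat.
rewrite natrM in tltR.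
have Kp : 0 < (K.+1)%:R :> R by rewrite ltr0n.
have lneps : ln (eps^-1) = - ln eps by rewrite lnV // posrE.
have key : ln (eps^-1) < n%:R * (- ln rho).
  have nl : 0 < - ln rho by lra.
  have e : (n.+1)%:R * (K.+1)%:R = n%:R * (K.+1)%:R + (K.+1)%:R :> R.
    by rewrite -natr1 mulrDl mul1r.
  have h : (K.+1)%:R * (ln (eps^-1) / (- ln rho)) < (K.+1)%:R * n%:R.
    have -> : (K.+1)%:R * (ln (eps^-1) / (- ln rho)) = (K.+1)%:R / (- ln rho) * ln (eps^-1).
      by rewrite mulrA mulrAC.
    lra.
  rewrite ltr_pM2l // ltr_pdivrMr // in h.
have rn : rho ^+ n < eps.
  rewrite -ltr_ln ?posrE ?exprn_gt0 // lnXn // -mulr_natl.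
  lra.
lra.
Qed.

Set Implicit Arguments.
Unset Strict Implicit.
Unset Printing Implicit Defensive.

Definition OP (V : eqType) (s d : V) (q : seq V) :=
  [/\ s != d, last s q = d & uniq (s :: q)].

Definition W (V : eqType) (s : V) (q : seq V) (j : nat) := nth s (s :: q) j.

Lemma pe_nth (V : eqType) (s : V) q u v :
  path_edge s q u v <-> exists j, [/\ (j < size q)%N, u = W s q j & v = W s q j.+1].
Proof.
rewrite /path_edge /W.
have sz : size (zip (s :: q) q) = size q by rewrite size_zip /=; lia.
split.
  move/(nthP (s, s)) => [i]; rewrite sz => hi.
  rewrite nth_zip_cond sz hi => -[<- <-]; by exists i.
move=> [j [hj -> ->]]; apply/(nthP (s, s)); exists j; first by rewrite sz.
by rewrite nth_zip_cond sz hj.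
Qed.

Section OneP.
Variables (V : eqType) (s d : V) (q : seq V).
Hypothesis hq : OP s d q.

Lemma op_pos : (0 < size q)%N.
Proof. case: hq => sd lq _; case: q lq sd => //= <-; by rewrite eqxx. Qed.

Lemma W0 : W s q 0 = s. Proof. by []. Qed.

Lemma WL : W s q (size q) = d.
Proof. by case: hq => _ lq _; rewrite /W -last_nth. Qed.

Lemma W_inj i j : (i <= size q)%N -> (j <= size q)%N -> W s q i = W s q j -> i = j.
Proof.
case: hq => _ _ u hi hj e; apply/eqP; rewrite -(nth_uniq s _ _ u) ?ltnS //.
by rewrite /W in e; rewrite e.
Qed.

Lemma Wmem j : (0 < j)%N -> (j <= size q)%N -> W s q j \in q.
Proof. by case: j => // j _ hj; rewrite /W /=; apply: mem_nth. Qed.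

Lemma W_s j : (j <= size q)%N -> W s q j = s -> j = 0%N.
Proof. by move=> hj e; apply: W_inj => //; rewrite e. Qed.

Lemma W_d j : (j <= size q)%N -> W s q j = d -> j = size q.
Proof. by move=> hj e; apply: W_inj => //; rewrite e WL. Qed.

Lemma s_notin : s \notin q.
Proof. by case: hq => _ _ /andP[]. Qed.

Lemma pe_from j z : (j < size q)%N -> path_edge s q (W s q j) z = (z == W s q j.+1).
Proof.
move=> hj; apply/idP/eqP.
  case/pe_nth => i [hi e ->]; have := W_inj (ltnW hi) (ltnW hj) (esym e) => ->; done.
by move=> ->; apply/pe_nth; exists j.
Qed.

Lemma pe_to j z : (0 < j)%N -> (j <= size q)%N -> path_edge s q z (W s q j) = (z == W s q j.-1).
Proof.
case: j => // j _ hj; apply/idP/eqP.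
  case/pe_nth => i [hi -> e]; have := W_inj hi hj (esym e); by case => ->.
by move=> ->; apply/pe_nth; exists j.
Qed.

End OneP.

Section TwoP.
Variables (V : finType) (E : rel V) (s d : V) (q r : seq V).
Hypotheses (hq : OP s d q) (hr : OP s d r)
  (disj : forall x, x \in q -> x \in r -> x = d)
  (hE : forall u v, E u v = path_edge s q u v || path_edge s r u v).

Lemma r_from j z : (0 < j)%N -> (j < size q)%N -> path_edge s r (W s q j) z = false.
Proof.
move=> j0 jL; apply/negP => /pe_nth [i [hi e _]].
case: i hi e => [|i] hi e.
  by have := W_s hq (ltnW jL) e => j00; rewrite j00 in j0.
have := disj (Wmem s j0 (ltnW jL)); rewrite e (Wmem s (ltn0Sn i) (ltnW hi)) => /(_ isT) ed.
by have := W_d hq (ltnW jL) (etrans e ed) => jj; rewrite jj ltnn in jL.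
Qed.

Lemma r_to j z : (0 < j)%N -> (j < size q)%N -> path_edge s r z (W s q j) = false.
Proof.
move=> j0 jL; apply/negP => /pe_nth [i [hi _ e]].
have := disj (Wmem s j0 (ltnW jL)); rewrite e (Wmem s (ltn0Sn i) hi) => /(_ isT) ed.
by have := W_d hq (ltnW jL) (etrans e ed) => jj; rewrite jj ltnn in jL.
Qed.

Lemma out_int j z : (0 < j)%N -> (j < size q)%N -> E (W s q j) z = (z == W s q j.+1).
Proof. by move=> j0 jL; rewrite hE r_from // orbF (pe_from hq). Qed.

Lemma in_int j z : (0 < j)%N -> (j < size q)%N -> E z (W s q j) = (z == W s q j.-1).
Proof. by move=> j0 jL; rewrite hE r_to // orbF (pe_to hq) // ltnW. Qed.

Lemma edge_q j : (j < size q)%N -> E (W s q j) (W s q j.+1).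
Proof. by move=> jL; rewrite hE (pe_from hq) // eqxx. Qed.

Lemma out_s z : E s z = (z == W s q 1) || (z == W s r 1).
Proof.
have h1 := @pe_from _ _ _ _ hq 0 z (op_pos hq).
have h2 := @pe_from _ _ _ _ hr 0 z (op_pos hr).
change (W s q 0) with s in h1; change (W s r 0) with s in h2.
by rewrite hE h1 h2.
Qed.

Lemma in_d z : E z d = (z == W s q (size q).-1) || (z == W s r (size r).-1).
Proof.
have h1 := @pe_to _ _ _ _ hq (size q) z (op_pos hq) (leqnn _).
have h2 := @pe_to _ _ _ _ hr (size r) z (op_pos hr) (leqnn _).
rewrite (WL hq) in h1; rewrite (WL hr) in h2.
by rewrite hE h1 h2.
Qed.

End TwoP.

Lemma fedge_ge0 (R : realType) (V : finType) (E : rel V) (st : state R V) u v :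
  (forall u v, E u v -> 0 <= ph st u v) -> (forall v, 0 <= fw st v) -> 0 <= fedge E st u v.
Proof.
move=> hp hf; rewrite /fedge; case: ifP => // e; case: ifP => // _.
by rewrite divr_ge0 ?mulr_ge0 ?hp ?hf //; apply: sumr_ge0 => z ez; apply: hp.
Qed.

Lemma bedge_ge0 (R : realType) (V : finType) (E : rel V) (st : state R V) u v :
  (forall u v, E u v -> 0 <= ph st u v) -> (forall v, 0 <= bw st v) -> 0 <= bedge E st u v.
Proof.
move=> hp hf; rewrite /bedge; case: ifP => // e; case: ifP => // _.
by rewrite divr_ge0 ?mulr_ge0 ?hp ?hf //; apply: sumr_ge0 => z ez; apply: hp.
Qed.

Lemma sum_pred2 (R : realType) (V : finType) (P : pred V) (F : V -> R) a b :
  a != b -> (forall z, P z = (z == a) || (z == b)) -> \sum_(z | P z) F z = F a + F b.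
Proof.
move=> ab hP; rewrite (bigD1 a) /=; last by rewrite hP; apply/orP; left.
congr (_ + _); apply: big_pred1 => z /=; rewrite hP.
by case: (eqVneq z a) => [->|za] /=; rewrite ?andbF ?andbT // (negbTE ab).
Qed.

Lemma card_pred2 (V : finType) (P : pred V) a b :
  a != b -> (forall z, P z = (z == a) || (z == b)) -> #|P| = 2%N.
Proof. by move=> ab hP; rewrite (eq_card (B := pred2 a b)) ?card2 ?ab // => z; rewrite hP. Qed.

Lemma card_pred1 (V : finType) (P : pred V) a :
  (forall z, P z = (z == a)) -> #|P| = 1%N.
Proof. by move=> hP; rewrite (eq_card (B := pred1 a)) ?card1 // => z; rewrite hP. Qed.

Section Dyn.
Variables (R : realType) (V : finType) (E : rel V) (s d : V) (l : V -> R)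
  (dl fbar bbar : R) (p0 : V -> V -> R) (f0 b0 : V -> R).

Definition st t := traj E s d l dl (fun _ => fbar) (fun _ => bbar) p0 f0 b0 t.

Lemma ph_S t u v : ph (st t.+1) u v = dl * (ph (st t) u v + fedge E (st t) u v + bedge E (st t) u v).
Proof. by []. Qed.

Lemma fw_S t v : v != s -> fw (st t.+1) v = (1 - l v) * \sum_(z | E z v) fedge E (st t) z v.
Proof. by move=> vs; rewrite /= (negbTE vs). Qed.

Lemma bw_S t u : u != d -> bw (st t.+1) u = (1 - l u) * \sum_(z | E u z) bedge E (st t) u z.
Proof. by move=> ud; rewrite /= (negbTE ud). Qed.

Lemma fw_s t : fw (st t) s = fbar.
Proof. by case: t => [|t] /=; rewrite eqxx. Qed.

Lemma bw_d t : bw (st t) d = bbar.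
Proof. by case: t => [|t] /=; rewrite eqxx. Qed.

Hypotheses (hl : forall v, 0 <= l v <= 1) (hdl : 0 < dl) (hfb : 0 <= fbar) (hbb : 0 <= bbar)
  (hp0 : forall u v, E u v -> 0 <= p0 u v) (hf0 : forall v, 0 <= f0 v) (hb0 : forall v, 0 <= b0 v).

Lemma nonneg t : [/\ (forall u v, E u v -> 0 <= ph (st t) u v),
   (forall v, 0 <= fw (st t) v) & (forall v, 0 <= bw (st t) v)].
Proof.
elim: t => [|t [IHp IHf IHb]].
  split => [u v e|v|v] /=; first exact: hp0.
    by case: ifP.
  by case: ifP.
have l1 v : 0 <= 1 - l v by have /andP[_ h] := hl v; rewrite subr_ge0.
split => [u v e|v|v].
- rewrite ph_S; apply: mulr_ge0; first exact: ltW.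
  by rewrite !addr_ge0 ?IHp ?fedge_ge0 ?bedge_ge0.
- rewrite /=; case: ifP => // _; apply: mulr_ge0 => //.
  by apply: sumr_ge0 => z _; apply: fedge_ge0.
- rewrite /=; case: ifP => // _; apply: mulr_ge0 => //.
  by apply: sumr_ge0 => z _; apply: bedge_ge0.
Qed.

Lemma fe_ge0 t u v : 0 <= fedge E (st t) u v.
Proof. by have [? ? ?] := nonneg t; apply: fedge_ge0. Qed.
Lemma be_ge0 t u v : 0 <= bedge E (st t) u v.
Proof. by have [? ? ?] := nonneg t; apply: bedge_ge0. Qed.
Lemma ph_ge0 t u v : E u v -> 0 <= ph (st t) u v.
Proof. by have [? ? ?] := nonneg t; auto. Qed.

Lemma ph_pos t u v : 0 < p0 u v -> 0 < ph (st t) u v.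
Proof.
move=> h; elim: t => [//|t IH]; rewrite ph_S mulr_gt0 //.
by rewrite -addrA ltr_pwDl // addr_ge0 ?fe_ge0 ?be_ge0.
Qed.

End Dyn.

Section Propag.
Variables (R : realType) (V : finType) (E : rel V) (s d : V) (l : V -> R)
  (dl fbar bbar : R) (p0 : V -> V -> R) (f0 b0 : V -> R) (q r : seq V).
Hypotheses (hq : OP s d q) (hr : OP s d r)
  (disj : forall x, x \in q -> x \in r -> x = d)
  (hE : forall u v, E u v = path_edge s q u v || path_edge s r u v).

Local Notation S t := (st E s d l dl fbar bbar p0 f0 b0 t).
Local Notation Wq := (W s q).

Lemma outdeg_int j : (0 < j)%N -> (j < size q)%N -> outdeg E (Wq j) = 1%N.
Proof. by move=> j0 jL; apply: (@card_pred1 _ _ (Wq j.+1)) => z /=; rewrite (out_int hq disj hE). Qed.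

Lemma indeg_int j : (0 < j)%N -> (j < size q)%N -> indeg E (Wq j) = 1%N.
Proof. by move=> j0 jL; apply: (@card_pred1 _ _ (Wq j.-1)) => z /=; rewrite (in_int hq disj hE). Qed.

Lemma W_neq_s j : (0 < j)%N -> (j <= size q)%N -> Wq j != s.
Proof. by move=> j0 jL; apply/eqP => e; have := W_s hq jL e => jj; rewrite jj in j0. Qed.

Lemma W_neq_d j : (j < size q)%N -> Wq j != d.
Proof. by move=> jL; apply/eqP => e; have := W_d hq (ltnW jL) e => jj; rewrite jj ltnn in jL. Qed.

Lemma fprop j t : (j < size q)%N ->
  fedge E (S (t + j)) (Wq j) (Wq j.+1) =
  fedge E (S t) s (Wq 1) * \prod_(1 <= i < j.+1) (1 - l (Wq i)).
Proof.
elim: j t => [|j IH] t hj; first by rewrite addn0 big_geq // mulr1.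
rewrite addnS {1}/fedge (edge_q hq hE hj) (outdeg_int _ hj) // eqxx.
rewrite fw_S; last by apply: W_neq_s => //; exact: ltnW.
rewrite (big_pred1 (Wq j)); last by move=> z /=; rewrite (in_int hq disj hE).
rewrite IH; last exact: ltnW.
rewrite [in RHS]big_nat_recr //=.
by ring.
Qed.

Lemma bprop n j t : (j + n < size q)%N ->
  bedge E (S (t + n)) (Wq j) (Wq j.+1) =
  bedge E (S t) (Wq (j + n)) (Wq (j + n).+1) * \prod_(j.+1 <= i < (j + n).+1) (1 - l (Wq i)).
Proof.
elim: n j t => [|n IH] j t hj; first by rewrite !addn0 big_geq // mulr1.
have j1L : (j.+1 < size q)%N by lia.
rewrite addnS {1}/bedge (edge_q hq hE (ltnW j1L)) (indeg_int _ j1L) // eqxx.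
rewrite bw_S; last exact: W_neq_d.
rewrite (big_pred1 (Wq j.+2)); last by move=> z /=; rewrite (out_int hq disj hE).
rewrite IH; last by rewrite addSnnS.
rewrite -addSnnS [in RHS]big_ltn //; last by lia.
by ring.
Qed.

End Propag.

Lemma leak_prod (R : realType) (V : eqType) (s d : V) (q : seq V) (l : V -> R) :
  OP s d q -> pathleak l d q = 1 - \prod_(1 <= i < size q) (1 - l (W s q i)).
Proof.
move=> hq; rewrite /pathleak; congr (_ - _).
have L0 := op_pos hq.
rewrite (big_nth s) big_mkcond /=.
have hW := @W_d _ _ _ _ hq.
have WL' := WL hq.
move: hW WL'; case e: (size q) L0 => [|L] // _ hW WL'.
rewrite [in LHS]big_nat_recr //=.
have -> : (nth s q L != d) = false by apply/negbF/eqP; exact: WL'.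
rewrite mulr1 big_add1 /=.
apply: eq_big_nat => i /andP[_ hi].
case: ifP => // /negbFE /eqP ed.
have := hW i.+1 (ltnW (hi : (i.+1 < L.+1)%N)) ed; case=> h; by rewrite h ltnn in hi.
Qed.

Unset Implicit Arguments.
Set Strict Implicit.

Theorem theorem1 (R : realType) (V : finType) (E : rel V) (s d : V)
    (p1 p2 : seq V) (l : V -> R) (delta fbar bbar : R)
    (p0 : V -> V -> R) (f0 b0 : V -> R) :
  two_parallel_paths E s d p1 p2 ->
  (forall v, 0 <= l v <= 1) ->
  0 < delta < 1 ->
  0 < fbar -> 0 < bbar ->
  (forall u v, E u v -> 0 <= p0 u v) ->
  (forall u v, path_edge s p1 u v -> 0 < p0 u v) ->
  (forall v, 0 <= f0 v) -> (forall v, 0 <= b0 v) ->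
  pathleak l d p1 < pathleak l d p2 ->
  exists C1 C2 : R, 0 < C1 /\ 0 < C2 /\
    forall eps : R, 0 < eps < 1 ->
    forall t : nat, C1 + C2 * ln (eps^-1) <= t%:R ->
    forall u v, path_edge s p1 u v ->
      let st := traj E s d l delta (fun _ => fbar) (fun _ => bbar) p0 f0 b0 t in
      1 - eps <= nuf E st u v /\ 1 - eps <= nub E st u v.
Proof.
move=> [sd [[_ la1 u1] [_ la2 u2] disj hE _]] hl /andP[dl0 dl1] hf hb hp0 hp1 hf0 hb0 hleak.
have hq1 : OP s d p1 by split.
have hq2 : OP s d p2 by split.
have disj2 : forall x, x \in p2 -> x \in p1 -> x = d by move=> x a b; exact: disj.
have hE2 : forall u v, E u v = path_edge s p2 u v || path_edge s p1 u v.
  by move=> u v; rewrite orbC.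
set L1 := size p1; set L2 := size p2.
have L10 : (0 < L1)%N := op_pos hq1.
have L20 : (0 < L2)%N := op_pos hq2.
pose a1 := \prod_(1 <= i < L1) (1 - l (W s p1 i)).
pose a2 := \prod_(1 <= i < L2) (1 - l (W s p2 i)).
have lv v : 0 <= 1 - l v <= 1.
  by have /andP[h1 h2] := hl v; apply/andP; split; lra.
have a1_01 : 0 <= a1 <= 1.
  apply/andP; split; first by apply: prodr_ge0 => i _; have /andP[] := lv (W s p1 i).
  by apply: prodr_ile1 => i _; apply: lv.
have a2_01 : 0 <= a2 <= 1.
  apply/andP; split; first by apply: prodr_ge0 => i _; have /andP[] := lv (W s p2 i).
  by apply: prodr_ile1 => i _; apply: lv.
have a12 : a2 < a1.
  by move: hleak; rewrite (leak_prod l hq1) (leak_prod l hq2) -/a1 -/a2; lra.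
have not11 : ~ (L1 = 1%N /\ L2 = 1%N).
  move=> [e1 e2]; move: a12; rewrite /a1 /a2 e1 e2 !big_geq //; lra.
pose a := W s p1 1; pose a' := W s p2 1.
pose c := W s p1 L1.-1; pose c' := W s p2 L2.-1.
have neq_a : a != a'.
  apply/eqP => e.
  have ad : a = d by apply: disj; [exact: (Wmem s (ltn0Sn 0) L10) | rewrite e; exact: (Wmem s (ltn0Sn 0) L20)].
  apply: not11; split.
    by have := W_d hq1 L10 ad.
  by have := W_d hq2 L20 (etrans (esym e) ad).
have neq_c : c != c'.
  apply/eqP => e.
  have hc1 : (L1.-1 <= L1)%N := leq_pred _.
  have hc2 : (L2.-1 <= L2)%N := leq_pred _.
  case: (ltngtP L1 1%N) => [|h1|h1].
  - by rewrite ltnS leqn0 => /eqP h; rewrite h in L10.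
  - have c0 : (0 < L1.-1)%N by rewrite -ltnS prednK.
    case: (ltngtP L2 1%N) => [|h2|h2].
    + by rewrite ltnS leqn0 => /eqP h; rewrite h in L20.
    + have c'0 : (0 < L2.-1)%N by rewrite -ltnS prednK.
      have cd : c = d by apply: disj; [exact: (Wmem s c0 hc1) | rewrite e; exact: (Wmem s c'0 hc2)].
      have h := W_d hq1 hc1 cd; move: h L10; rewrite -/L1; clear; lia.
    + have cs : c = s by rewrite e /c' h2.
      by have := W_s hq1 hc1 cs => h; rewrite h in c0.
  - have cs : c' = s by rewrite -e /c h1.
    have := W_s hq2 hc2 cs => h; apply: not11; split => //.
    by rewrite -(prednK L20) h.
have hk1 : (L1.-1 < L1)%N by rewrite ltn_predL.
have hk2 : (L2.-1 < L2)%N by rewrite ltn_predL.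
pose S t := st E s d l delta fbar bbar p0 f0 b0 t.
have Esa : E s a := edge_q hq1 hE L10.
have Esa' : E s a' := edge_q hq2 hE2 L20.
have Ecd : E c d.
  by have := edge_q hq1 hE hk1; rewrite (prednK L10) (WL hq1).
have Ecd' : E c' d.
  by have := edge_q hq2 hE2 hk2; rewrite (prednK L20) (WL hq2).
have od_s : outdeg E s = 2%N.
  by apply: (@card_pred2 _ _ a a') => // z /=; apply: (out_s hq1 hq2 hE).
have id_d : indeg E d = 2%N.
  by apply: (@card_pred2 _ _ c c') => // z /=; apply: (in_d hq1 hq2 hE).
pose A t := ph (S t) s a.
pose B t := ph (S t) s a'.
pose C t := ph (S t) c d.
pose D t := ph (S t) c' d.
pose x t := A t / (A t + B t).
pose y t := C t / (C t + D t).
have sumS t : \sum_(z | E s z) ph (S t) s z = A t + B t.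
  by apply: sum_pred2 => // z; apply: (out_s hq1 hq2 hE).
have sumD t : \sum_(z | E z d) ph (S t) z d = C t + D t.
  by apply: sum_pred2 => // z; apply: (in_d hq1 hq2 hE).
have p1pos t j : (j < L1)%N -> 0 < ph (S t) (W s p1 j) (W s p1 j.+1).
  move=> hj; apply: (ph_pos s d hl dl0 (ltW hf) (ltW hb) hp0 hf0 hb0 t).
  by apply: hp1; apply/pe_nth; exists j.
have Apos t : 0 < A t := p1pos t 0%N L10.
have Cpos t : 0 < C t.
  by have := p1pos t _ hk1; rewrite (prednK L10) (WL hq1).
have Bge t : 0 <= B t := ph_ge0 s d hl dl0 (ltW hf) (ltW hb) hp0 hf0 hb0 t Esa'.
have Dge t : 0 <= D t := ph_ge0 s d hl dl0 (ltW hf) (ltW hb) hp0 hf0 hb0 t Ecd'.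
have ABne t : A t + B t != 0 by apply: lt0r_neq0; have := Apos t; have := Bge t; lra.
have CDne t : C t + D t != 0 by apply: lt0r_neq0; have := Cpos t; have := Dge t; lra.
have fsa t : fedge E (S t) s a = fbar * x t.
  by rewrite /fedge Esa od_s /= fw_s sumS /x mulrA.
have fsa' t : fedge E (S t) s a' = fbar * (1 - x t).
  rewrite /fedge Esa' od_s /= fw_s sumS /x -mulrA; congr (_ * _).
  by rewrite -/(B t); field; apply: ABne.
have bcd t : bedge E (S t) c d = bbar * y t.
  by rewrite /bedge Ecd id_d /= bw_d sumD /y mulrA.
have bcd' t : bedge E (S t) c' d = bbar * (1 - y t).
  rewrite /bedge Ecd' id_d /= bw_d sumD /y -mulrA; congr (_ * _).
  by rewrite -/(D t); field; apply: CDne.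
have hfp t : fedge E (S (t + L1.-1)%N) c d = fbar * x t * a1.
  have h := @fprop R V E s d l delta fbar bbar p0 f0 b0 p1 p2 hq1 disj hE L1.-1 t hk1.
  by rewrite (prednK L10) (WL hq1) fsa in h.
have hfp2 t : fedge E (S (t + L2.-1)%N) c' d = fbar * (1 - x t) * a2.
  have h := @fprop R V E s d l delta fbar bbar p0 f0 b0 p2 p1 hq2 disj2 hE2 L2.-1 t hk2.
  by rewrite (prednK L20) (WL hq2) fsa' in h.
have hbp t : bedge E (S (t + L1.-1)%N) s a = bbar * y t * a1.
  have h := @bprop R V E s d l delta fbar bbar p0 f0 b0 p1 p2 hq1 disj hE L1.-1 0 t (ltac:(by rewrite add0n)).
  by rewrite add0n (prednK L10) (WL hq1) bcd in h.
have hbp2 t : bedge E (S (t + L2.-1)%N) s a' = bbar * (1 - y t) * a2.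
  have h := @bprop R V E s d l delta fbar bbar p0 f0 b0 p2 p1 hq2 disj2 hE2 L2.-1 0 t (ltac:(by rewrite add0n)).
  by rewrite add0n (prednK L20) (WL hq2) bcd' in h.
pose K := maxn L1.-1 L2.-1.
have [C1 [C2 [C10 [C20 hC]]]] : exists C1 C2 : R, 0 < C1 /\ 0 < C2 /\
    forall eps : R, 0 < eps < 1 ->
    forall t : nat, C1 + C2 * ln (eps^-1) <= t%:R ->
    1 - eps <= x t /\ 1 - eps <= y t.
  apply: (@core R fbar bbar a1 a2 delta L1.-1 L2.-1 K A B C D x y) => //.
  - by case/andP: a2_01.
  - by case/andP: a1_01.
  - exact: leq_maxl.
  - exact: leq_maxr.
  move=> t ht.
  have e1 : (L1.-1 <= t)%N by apply: leq_trans ht; exact: leq_maxl.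
  have e2 : (L2.-1 <= t)%N by apply: leq_trans ht; exact: leq_maxr.
  have hb1 := hbp (t - L1.-1)%N; rewrite subnK // in hb1.
  have hb2 := hbp2 (t - L2.-1)%N; rewrite subnK // in hb2.
  have hf1 := hfp (t - L1.-1)%N; rewrite subnK // in hf1.
  have hf2 := hfp2 (t - L2.-1)%N; rewrite subnK // in hf2.
  split.
  - rewrite /A ph_S -/(A t) fsa hb1; ring.
  - rewrite /B ph_S -/(B t) fsa' hb2; ring.
  - rewrite /C ph_S -/(C t) bcd hf1; ring.
  - rewrite /D ph_S -/(D t) bcd' hf2; ring.
exists C1, C2; split => //; split => // eps he t ht u v huv.
cbv zeta.
change (traj E s d l delta (fun=> fbar) (fun=> bbar) p0 f0 b0 t) with (S t).
have [hxe hye] := hC eps he t ht.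
have e01 : 0 < eps by case/andP: he.
case/pe_nth: huv => j [hj -> ->].
have pp := p1pos t j hj.
split.
- case: j hj pp => [|j] hj pp.
    by change (W s p1 0) with s; rewrite /nuf sumS.
  rewrite /nuf (big_pred1 (W s p1 j.+2)); last first.
    by move=> z /=; apply: (out_int hq1 disj hE).
  rewrite divff; [lra | exact: lt0r_neq0].
- case: (ltngtP j.+1 L1) => [hj1|hj1|hj1].
  + rewrite /nub (big_pred1 (W s p1 j)); last first.
      by move=> z /=; rewrite (in_int hq1 disj hE).
    rewrite divff; [lra | exact: lt0r_neq0].
  + by move: hj hj1; rewrite -/L1; clear; lia.
  + have ej : j = L1.-1 by rewrite -hj1.
    rewrite ej (prednK L10) (WL hq1) /nub sumD.
    exact: hye.
Qed.
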